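(* Let $G$ be a TDLC-group, $H$ a closed subgroup of $G$, and $M$ a finitely generated projective discrete $\mathbb{Q}[G]$-module with filling norm $\|\cdot\|_M$. Regard $M$ as a discrete $\mathbb{Q}[H]$-module by restriction, and suppose $N$ is a finitely generated direct summand of $M$ in the category of discrete $\mathbb{Q}[H]$-modules. Then $N$ is undistorted with respect to $\|\cdot\|_M$: the restriction of $\|\cdot\|_M$ to $N$ is equivalent to the filling norm of $N$ as a $\mathbb{Q}[H]$-module.
   Context: A TDLC-group is a totally disconnected locally compact Hausdorff topological group. For a TDLC-group $G$, a discrete $\mathbb{Q}[G]$-module is a left $\mathbb{Q}[G]$-module in which every element has open stabilizer; restriction to a closed subgroup $H$ sends discrete $\mathbb{Q}[G]$-modules to discrete $\mathbb{Q}[H]$-modules and projectives to projectives. A $G$-set $\Omega$ is proper if all point stabilizers are compact open; $\mathbb{Q}[\Omega]$ is then a proper permutation module, finitely generated iff $\Omega/G$ is finite, with $\ell_1$-norm $\|\sum a_\omega\omega\|_1=\sum|a_\omega|$. For a finitely generated discrete module $M$ and a surjection $\partial:\mathbb{Q}[\Omega]\twoheadrightarrow M$ from a finitely generated proper permutation module, the filling pseudo-norm is $\|m\|_\partial=\inf\{\|x\|_1:\partial(x)=m\}$; it is unique up to equivalence (each bounded by a constant times the other) and is a norm when $M$ is projective. *)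

(* Defs.v *)
From Stdlib Require Import Reals ZArith ClassicalEpsilon.
From Stdlib Require List.
From HB Require Import structures.
From mathcomp Require Import all_boot all_algebra.

Set Implicit Arguments.
Unset Strict Implicit.
Unset Printing Implicit Defensive.

Import GRing.Theory.

Record TopGroup := {
  tg_car :> Type;
  tg_mul : tg_car -> tg_car -> tg_car;
  tg_one : tg_car;
  tg_inv : tg_car -> tg_car;
  tg_open : (tg_car -> Prop) -> Prop;
  tg_mulA : forall x y z, tg_mul x (tg_mul y z) = tg_mul (tg_mul x y) z;
  tg_mul1g : forall x, tg_mul tg_one x = x;
  tg_mulg1 : forall x, tg_mul x tg_one = x;
  tg_mulVg : forall x, tg_mul (tg_inv x) x = tg_one;
  tg_mulgV : forall x, tg_mul x (tg_inv x) = tg_one;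
  tg_open_full : tg_open (fun _ => True);
  tg_open_union : forall (I : Type) (U : I -> tg_car -> Prop),
      (forall i, tg_open (U i)) -> tg_open (fun x => exists i, U i x);
  tg_open_inter : forall U V, tg_open U -> tg_open V ->
      tg_open (fun x => U x /\ V x);
  tg_mul_cont : forall U x y, tg_open U -> U (tg_mul x y) ->
      exists V W, tg_open V /\ tg_open W /\ V x /\ W y /\
        (forall a b, V a -> W b -> U (tg_mul a b));
  tg_inv_cont : forall U, tg_open U -> tg_open (fun x => U (tg_inv x))
}.

Section Topology.
Variable G : TopGroup.

Definition compact (K : G -> Prop) : Prop :=
  forall (I : Type) (U : I -> G -> Prop),
    (forall i, tg_open (U i)) ->
    (forall x, K x -> exists i, U i x) ->
    exists l : list I, forall x, K x -> exists i, List.In i l /\ U i x.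

Definition hausdorff : Prop :=
  forall x y : G, x <> y -> exists U V, tg_open U /\ tg_open V /\ U x /\ V y /\
    (forall z, ~ (U z /\ V z)).

Definition locally_compact : Prop :=
  forall x : G, exists U K, tg_open U /\ U x /\ compact K /\ (forall z, U z -> K z).

Definition connected (S : G -> Prop) : Prop :=
  ~ exists U V, tg_open U /\ tg_open V /\
      (forall x, S x -> U x \/ V x) /\
      (exists x, S x /\ U x) /\ (exists x, S x /\ V x) /\
      (forall x, S x -> U x -> V x -> False).

Definition totally_disconnected : Prop :=
  forall S, connected S -> forall x y, S x -> S y -> x = y.

Definition TDLC : Prop := hausdorff /\ locally_compact /\ totally_disconnected.

Definition closed_subgroup (H : G -> Prop) : Prop :=
  H (tg_one G) /\ (forall x y, H x -> H y -> H (tg_mul x y)) /\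
  (forall x, H x -> H (tg_inv x)) /\ tg_open (fun x => ~ H x).

Definition wholeG : G -> Prop := fun _ => True.

Definition open_in (S U : G -> Prop) : Prop :=
  exists W, tg_open W /\ forall g, S g -> (U g <-> W g).

(* (the action is a map G -> V -> V of which only the values on S      *)
(* matter)                                                             *)

Local Open Scope ring_scope.

Definition is_action (S : G -> Prop) (X : Type) (a : G -> X -> X) : Prop :=
  (forall x, a (tg_one G) x = x) /\
  (forall g h x, S g -> S h -> a (tg_mul g h) x = a g (a h x)).

Definition dmodule (S : G -> Prop) (V : lmodType rat) (act : G -> V -> V) : Prop :=
  is_action S act /\
  (forall g, S g -> forall (c : rat) (u v : V), act g (c *: u + v) = c *: act g u + act g v) /\
  (forall v, open_in S (fun g => act g v = v)).

Definition dmorph (S : G -> Prop) (V W : lmodType rat)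
    (actV : G -> V -> V) (actW : G -> W -> W) (f : V -> W) : Prop :=
  (forall (c : rat) (u v : V), f (c *: u + v) = c *: f u + f v) /\
  (forall g v, S g -> f (actV g v) = actW g (f v)).

Definition projective (S : G -> Prop) (M : lmodType rat) (act : G -> M -> M) : Prop :=
  forall (A B : lmodType rat) (actA : G -> A -> A) (actB : G -> B -> B)
         (p : A -> B) (f : M -> B),
    dmodule S actA -> dmodule S actB -> dmorph S actA actB p ->
    (forall b, exists a, p a = b) -> dmorph S act actB f ->
    exists h : M -> A, dmorph S act actA h /\ forall m, p (h m) = f m.

Inductive gen (S : G -> Prop) (V : lmodType rat) (act : G -> V -> V) (l : list V) : V -> Prop :=
| gen_base x : List.In x l -> gen S act l x
| gen_zero : gen S act l 0
| gen_add u v : gen S act l u -> gen S act l v -> gen S act l (u + v)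
| gen_scale (c : rat) u : gen S act l u -> gen S act l (c *: u)
| gen_act g u : S g -> gen S act l u -> gen S act l (act g u).

Definition fin_gen (S : G -> Prop) (V : lmodType rat) (act : G -> V -> V) : Prop :=
  exists l : list V, forall v, gen S act l v.

Definition submodule (S : G -> Prop) (V : lmodType rat) (act : G -> V -> V) (N : V -> Prop) : Prop :=
  N 0 /\ (forall u v, N u -> N v -> N (u + v)) /\ (forall (c : rat) u, N u -> N (c *: u)) /\
  (forall g u, S g -> N u -> N (act g u)).

Definition fin_gen_sub (S : G -> Prop) (V : lmodType rat) (act : G -> V -> V) (N : V -> Prop) : Prop :=
  exists l : list V, (forall x, List.In x l -> N x) /\ (forall v, N v -> gen S act l v).

Definition direct_summand (S : G -> Prop) (V : lmodType rat) (act : G -> V -> V) (N : V -> Prop) : Prop :=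
  submodule S act N /\
  exists N' : V -> Prop, submodule S act N' /\
    (forall m, exists n n', N n /\ N' n' /\ m = n + n') /\
    (forall m, N m -> N' m -> m = 0).

Definition int2Z (z : int) : Z :=
  match z with Posz n => Z.of_nat n | Negz n => Z.opp (Z.of_nat n.+1) end.

Definition rat2R (q : rat) : R := Rdiv (IZR (int2Z (numq q))) (IZR (int2Z (denq q))).

(* An element x = sum_{w in s} c w . w of Q[Omega] is given by a duplicate
   free list s of points of Omega and coefficients c. *)
Definition lin_ext (Om : Type) (V : lmodType rat) (phi : Om -> V) (s : list Om) (c : Om -> rat) : V :=
  \sum_(w <- s) c w *: phi w.

Definition l1norm (Om : Type) (s : list Om) (c : Om -> rat) : R :=
  List.fold_right (fun w acc => Rplus (Rabs (rat2R (c w))) acc) R0 s.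

(* A surjection  Q[Omega] ->> T  (T a submodule of V) from a finitely
   generated proper permutation Q[S]-module, determined by the equivariant
   image phi of the basis Omega. *)
Record filling (S : G -> Prop) (V : lmodType rat) (act : G -> V -> V) (T : V -> Prop) := {
  fl_set : Type;
  fl_act : G -> fl_set -> fl_set;
  fl_phi : fl_set -> V;
  fl_action : is_action S fl_act;
  fl_proper : forall w, compact (fun g => S g /\ fl_act g w = w) /\
                        open_in S (fun g => S g /\ fl_act g w = w);
  (* finitely generated: finitely many S-orbits *)
  fl_fin : exists l : list fl_set, forall w, exists w0 g,
              List.In w0 l /\ S g /\ w = fl_act g w0;
  (* the linear extension of phi is a Q[S]-module map *)
  fl_equiv : forall g w, S g -> fl_phi (fl_act g w) = act g (fl_phi w);
  fl_onto : forall v, T v <-> exists (s : list fl_set) (c : fl_set -> rat),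
              List.NoDup s /\ v = lin_ext fl_phi s c
}.

Definition Rinf (P : R -> Prop) : R :=
  epsilon (inhabits R0) (fun r => (forall x, P x -> Rle r x) /\
                                  (forall b, (forall x, P x -> Rle b x) -> Rle b r)).

Definition fnorm (S : G -> Prop) (V : lmodType rat) (act : G -> V -> V) (T : V -> Prop)
    (F : filling S act T) (v : V) : R :=
  Rinf (fun r => exists (s : list (fl_set F)) (c : fl_set F -> rat),
          List.NoDup s /\ v = lin_ext (@fl_phi S V act T F) s c /\ r = l1norm s c).

End Topology.

Definition norm_equiv (V : Type) (n1 n2 : V -> R) (T : V -> Prop) : Prop :=
  exists C : R, Rlt R0 C /\ forall v, T v -> Rle (n1 v) (Rmult C (n2 v)) /\ Rle (n2 v) (Rmult C (n1 v)).

(* Main.v *)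
Require Import Defs.
From Stdlib Require Import Reals ClassicalEpsilon Lra Psatz.
From Stdlib Require List.
From HB Require Import structures.
From mathcomp Require Import all_boot all_order all_algebra.
From mathcomp Require Import Rstruct boolp.
Import Order.TTheory GRing.Theory Num.Theory.
Local Open Scope ring_scope.
Set Implicit Arguments.
Unset Strict Implicit.


Definition ET (T : Type) : Type := T.
HB.instance Definition _ (T : Type) := gen_eqMixin (ET T).
HB.instance Definition _ (T : Type) := gen_choiceMixin (ET T).

Definition fsupp (T : Type) (f : ET T -> rat) : Prop :=
  exists l : seq (ET T), forall w, f w != 0 -> w \in l.

Definition FS (T : Type) : Type := {f : ET T -> rat | fsupp f}.
HB.instance Definition _ (T : Type) := gen_eqMixin (FS T).
HB.instance Definition _ (T : Type) := gen_choiceMixin (FS T).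

Section FSops.
Variable T : Type.
Implicit Types f g h : FS T.

Lemma fsext f g : (forall w, sval f w = sval g w) -> f = g.
Proof.
case: f g => [f fP] [g gP] /= H.
have E : f = g by apply: functional_extensionality_dep.
subst g. by rewrite (Prop_irrelevance fP gP).
Qed.

Lemma fsupp0 : fsupp (fun _ : ET T => 0 : rat).
Proof. by exists [::] => w; rewrite eqxx. Qed.
Definition fs0 : FS T := exist _ _ fsupp0.

Lemma fsuppD f g : fsupp (fun w => sval f w + sval g w).
Proof.
case: f g => [f [l1 H1]] [g [l2 H2]] /=; exists (l1 ++ l2) => w.
rewrite mem_cat; case: (eqVneq (f w) 0) => [->|/H1 ->//].
by rewrite add0r => /H2 ->; rewrite orbT.
Qed.
Definition fsadd f g : FS T := exist _ _ (fsuppD f g).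

Lemma fsuppZ (c : rat) f : fsupp (fun w => c * sval f w).
Proof.
case: f => [f [l H]] /=; exists l => w.
by case: (eqVneq (f w) 0) => [->|/H //]; rewrite mulr0 eqxx.
Qed.
Definition fsscale c f : FS T := exist _ _ (fsuppZ c f).
Definition fsopp f : FS T := fsscale (-1) f.

Lemma fsaddA : associative fsadd.
Proof. by move=> f g h; apply: fsext => w /=; rewrite addrA. Qed.
Lemma fsaddC : commutative fsadd.
Proof. by move=> f g; apply: fsext => w /=; rewrite addrC. Qed.
Lemma fsadd0 : left_id fs0 fsadd.
Proof. by move=> f; apply: fsext => w /=; rewrite add0r. Qed.
Lemma fsaddN : left_inverse fs0 fsopp fsadd.
Proof. by move=> f; apply: fsext => w /=; rewrite mulN1r addNr. Qed.

HB.instance Definition _ := GRing.isZmodule.Build (FS T) fsaddA fsaddC fsadd0 fsaddN.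

Lemma fsscaleA a b f : fsscale a (fsscale b f) = fsscale (a * b) f.
Proof. by apply: fsext => w /=; rewrite mulrA. Qed.
Lemma fsscale1 : left_id 1 fsscale.
Proof. by move=> f; apply: fsext => w /=; rewrite mul1r. Qed.
Lemma fsscaleDr : right_distributive fsscale +%R.
Proof. by move=> a f g; apply: fsext => w /=; rewrite mulrDr. Qed.
Lemma fsscaleDl f : {morph fsscale^~ f : a b / a + b}.
Proof. by move=> a b; apply: fsext => w /=; rewrite mulrDl. Qed.

HB.instance Definition _ := GRing.Zmodule_isLmodule.Build rat (FS T)
  fsscaleA fsscale1 fsscaleDr fsscaleDl.

Lemma fsvalD f g w : sval (f + g) w = sval f w + sval g w. Proof. by []. Qed.
Lemma fsvalZ c f w : sval (c *: f) w = c * sval f w. Proof. by []. Qed.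
Lemma fsval0 w : sval (0 : FS T) w = 0. Proof. by []. Qed.
End FSops.


Section Supp.
Variable T : Type.
Implicit Types f g : FS T.

Definition supp f : seq (ET T) :=
  undup [seq w <- sval (cid (svalP f)) | sval f w != 0].

Lemma mem_supp f w : (w \in supp f) = (sval f w != 0).
Proof.
rewrite /supp mem_undup mem_filter; case: cid => l Hl /=.
by case: (eqVneq (sval f w) 0) => //= /Hl.
Qed.

Lemma uniq_supp f : uniq (supp f).
Proof. exact: undup_uniq. Qed.

Lemma sum_any (V : nmodType) f (F : ET T -> V) (l : seq (ET T)) :
  uniq l -> (forall w, sval f w != 0 -> w \in l) ->
  (forall w, sval f w = 0 -> F w = 0) ->
  \sum_(w <- supp f) F w = \sum_(w <- l) F w.
Proof.
move=> ul Hl HF.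
have -> : \sum_(w <- l) F w = \sum_(w <- l | sval f w != 0) F w.
  rewrite [RHS]big_mkcond; apply: eq_bigr => w _.
  by case: (eqVneq (sval f w) 0) => [/HF ->|].
rewrite -[RHS]big_filter.
have Hp : perm_eq (supp f) [seq w <- l | sval f w != 0].
  apply: uniq_perm; first exact: uniq_supp.
    exact: filter_uniq.
  move=> w; rewrite mem_supp mem_filter.
  by case: (eqVneq (sval f w) 0) => //= /Hl ->.
exact: (perm_big _ Hp).
Qed.

Definition lin (V : lmodType rat) (phi : ET T -> V) f : V :=
  \sum_(w <- supp f) sval f w *: phi w.

Definition l1 f : rat := \sum_(w <- supp f) `|sval f w|.

Lemma lin_any (V : lmodType rat) (phi : ET T -> V) f l :
  uniq l -> (forall w, sval f w != 0 -> w \in l) ->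
  lin phi f = \sum_(w <- l) sval f w *: phi w.
Proof. by move=> ul Hl; apply: sum_any => // w ->; rewrite scale0r. Qed.

Lemma l1_any f l :
  uniq l -> (forall w, sval f w != 0 -> w \in l) ->
  l1 f = \sum_(w <- l) `|sval f w|.
Proof. by move=> ul Hl; apply: sum_any => // w ->; rewrite normr0. Qed.

Lemma suppU f g w : sval f w != 0 \/ sval g w != 0 -> w \in undup (supp f ++ supp g).
Proof. by rewrite mem_undup mem_cat !mem_supp => -[->|->] //; rewrite orbT. Qed.

Lemma linP (V : lmodType rat) (phi : ET T -> V) (c : rat) f g :
  lin phi (c *: f + g) = c *: lin phi f + lin phi g.
Proof.
set l := undup (supp f ++ supp g).
have ul : uniq l by exact: undup_uniq.
have Hf : forall w, sval f w != 0 -> w \in l by move=> w H; apply: suppU; left.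
have Hg : forall w, sval g w != 0 -> w \in l by move=> w H; apply: suppU; right.
rewrite (lin_any _ ul Hf) (lin_any _ ul Hg) (lin_any _ ul).
  rewrite scaler_sumr -big_split /=; apply: eq_bigr => w _.
  by rewrite scalerDl scalerA.
move=> w; rewrite fsvalD fsvalZ => H.
case: (eqVneq (sval f w) 0) => [E|]; last by move/Hf.
by apply: Hg; move: H; rewrite E mulr0 add0r.
Qed.

Lemma lin0 (V : lmodType rat) (phi : ET T -> V) : lin phi 0 = 0.
Proof. by have := linP phi 1 0 0; rewrite scaler0 add0r scale1r => /eqP; rewrite addrC -subr_eq subrr eq_sym => /eqP. Qed.

Lemma l1_ge0 f : 0 <= l1 f.
Proof. by apply: sumr_ge0 => w _; rewrite normr_ge0. Qed.

Lemma l1P (c : rat) f g : l1 (c *: f + g) <= `|c| * l1 f + l1 g.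
Proof.
set l := undup (supp f ++ supp g).
have ul : uniq l by exact: undup_uniq.
have Hf : forall w, sval f w != 0 -> w \in l by move=> w H; apply: suppU; left.
have Hg : forall w, sval g w != 0 -> w \in l by move=> w H; apply: suppU; right.
rewrite (l1_any ul Hf) (l1_any ul Hg) (l1_any ul).
  rewrite mulr_sumr -big_split /=; apply: ler_sum => w _.
  by rewrite -normrM ler_normD.
move=> w; rewrite fsvalD fsvalZ => H.
case: (eqVneq (sval f w) 0) => [E|]; last by move/Hf.
by apply: Hg; move: H; rewrite E mulr0 add0r.
Qed.

Lemma l10 : l1 (0 : FS T) = 0.
Proof. by rewrite /l1 (@sum_any _ _ _ [::]) ?big_nil // => w; rewrite fsval0 eqxx. Qed.

Lemma fsupp_list (s : seq (ET T)) (c : ET T -> rat) :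
  fsupp (fun w => if w \in s then c w else 0).
Proof. by exists s => w; case: (w \in s). Qed.
Definition of_list s c : FS T := exist _ _ (fsupp_list s c).

Lemma lin_of_list (V : lmodType rat) (phi : ET T -> V) s c :
  uniq s -> lin phi (of_list s c) = \sum_(w <- s) c w *: phi w.
Proof.
move=> us; rewrite (lin_any _ us); last by move=> w /=; case: (w \in s).
by apply: eq_big_seq => w /= ->.
Qed.

Lemma l1_of_list s c : uniq s -> l1 (of_list s c) = \sum_(w <- s) `|c w|.
Proof.
move=> us; rewrite (l1_any us); last by move=> w /=; case: (w \in s).
by apply: eq_big_seq => w /= ->.
Qed.

Variables (u v : ET T -> ET T).
Hypotheses (uv : forall w, u (v w) = w) (vu : forall w, v (u w) = w).

Lemma fsupp_perm f : fsupp (fun w => sval f (v w)).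
Proof.
exists (map u (supp f)) => w H; rewrite -[w]uv; apply: map_f.
by rewrite mem_supp.
Qed.
Definition fsperm f : FS T := exist _ _ (fsupp_perm f).

Lemma uniq_map_u f : uniq (map u (supp f)).
Proof.
rewrite map_inj_uniq ?uniq_supp // => x y E.
by rewrite -(vu x) E vu.
Qed.

Lemma mem_map_u f w : sval (fsperm f) w != 0 -> w \in map u (supp f).
Proof. by move=> H; rewrite -[w]uv; apply: map_f; rewrite mem_supp. Qed.

Lemma l1_perm f : l1 (fsperm f) = l1 f.
Proof.
rewrite (l1_any (uniq_map_u f) (@mem_map_u f)) big_map.
by apply: eq_bigr => w _ /=; rewrite vu.
Qed.

Lemma lin_perm (V : lmodType rat) (phi : ET T -> V) f :
  lin phi (fsperm f) = \sum_(w <- supp f) sval f w *: phi (u w).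
Proof.
rewrite (lin_any _ (uniq_map_u f) (@mem_map_u f)) big_map.
by apply: eq_bigr => w _ /=; rewrite vu.
Qed.

Lemma fspermP (c : rat) f g : fsperm (c *: f + g) = c *: fsperm f + fsperm g.
Proof. by apply: fsext. Qed.
End Supp.

Lemma assemble (T X : Type) (V : lmodType rat) (phi : ET T -> V) (F : X -> V)
    (a : X -> rat) (K : rat) (l : seq X) :
  (forall x, List.In x l -> exists z : FS T, lin phi z = F x /\ l1 z <= K) ->
  exists z : FS T, lin phi z = \sum_(x <- l) a x *: F x /\
                   l1 z <= K * \sum_(x <- l) `|a x|.
Proof.
elim: l => [|x l IH] H.
  by exists 0; rewrite !big_nil lin0 l10 mulr0.
have [z [E1 E2]] := H x (or_introl erefl).
have [z' [E1' E2']] := IH (fun y Hy => H y (or_intror Hy)).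
exists (a x *: z + z'); rewrite !big_cons linP E1 E1'; split=> //.
apply: le_trans (l1P _ _ _) _.
rewrite mulrDr; apply: lerD => //.
by rewrite [K * _]mulrC; apply: ler_wpM2l => //; rewrite normr_ge0.
Qed.


Lemma IZR_int2Z z : IZR (int2Z z) = (z%:~R : R).
Proof.
case: z => n.
  by rewrite /int2Z -INR_IZR_INZ INRE.
change (IZR (Z.opp (Z.of_nat n.+1)) = (Negz n)%:~R).
by rewrite opp_IZR -INR_IZR_INZ INRE NegzE mulrNz.
Qed.

Lemma rat2RE q : rat2R q = ratr q.
Proof. by rewrite /rat2R RdivE !IZR_int2Z. Qed.

Lemma In_mem (T : eqType) (x : T) s : List.In x s <-> x \in s.
Proof.
elim: s => [|y s IH] //=; rewrite in_cons; split.
  by case=> [->|/IH ->]; rewrite ?eqxx ?orbT.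
by case/orP => [/eqP ->|/IH]; [left|right].
Qed.

Lemma NoDup_uniq (T : eqType) (s : seq T) : List.NoDup s <-> uniq s.
Proof.
elim: s => [|x s IH] /=; first by split=> // _; constructor.
split.
  move=> H; inversion H; subst; apply/andP; split; last by apply/IH.
  by apply/negP => /In_mem.
case/andP => Hx Hs; constructor; last by apply/IH.
by move/In_mem; apply/negP.
Qed.

Lemma l1norm_rat (T : Type) (s : seq T) (c : T -> rat) :
  l1norm s c = rat2R (\sum_(w <- s) `|c w|).
Proof.
elim: s => [|x s IH] /=; first by rewrite big_nil rat2RE rmorph0.
by rewrite big_cons IH !rat2RE rmorphD /= ratr_norm RabsE RplusE.
Qed.

Lemma rat2R_le a b : a <= b -> Rle (rat2R a) (rat2R b).
Proof. by move=> H; rewrite !rat2RE; move: H; rewrite -(ler_rat R) => /RleP H; exact H. Qed.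

Lemma rat2R_ge0 a : 0 <= a -> Rle R0 (rat2R a).
Proof. by move=> H; have := rat2R_le H; rewrite rat2RE rmorph0. Qed.

Lemma rat2R_mul a b : rat2R (a * b) = Rmult (rat2R a) (rat2R b).
Proof. by rewrite !rat2RE rmorphM. Qed.

Lemma Rinf_spec (P : R -> Prop) : (exists x, P x) -> (forall x, P x -> Rle R0 (x)) ->
  (forall x, P x -> Rle (Rinf P) (x)) /\
  (forall b, (forall x, P x -> Rle (b) (x)) -> Rle (b) (Rinf P)).
Proof.
move=> [x0 Px0] H0.
have [m [Hub Hlub]] : { m | is_lub (fun y => P (Ropp y)) m }.
  apply: completeness.
    exists R0 => y Py; have := H0 _ Py; lra.
  by exists (Ropp x0); rewrite Ropp_involutive.
apply: (@epsilon_spec R (inhabits R0) (fun r => (forall x, P x -> Rle (r) (x)) /\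
       (forall b, (forall x, P x -> Rle (b) (x)) -> Rle (b) (r)))).
exists (Ropp m); split.
  move=> x Px; have : Rle (Ropp x) (m) by apply: Hub; rewrite Ropp_involutive.
  lra.
move=> b Hb; have : Rle (m) (Ropp b).
  apply: Hlub => y Py; have := Hb _ Py; lra.
lra.
Qed.

Section Fnorm.
Variables (G : TopGroup) (S : G -> Prop) (V : lmodType rat) (act : G -> V -> V)
  (T : V -> Prop) (F : filling S act T).

Lemma l1norm_ge0 (s : seq (fl_set F)) c : Rle R0 (l1norm s c).
Proof. by rewrite l1norm_rat; apply: rat2R_ge0; apply: sumr_ge0 => *; exact: normr_ge0. Qed.

Lemma fnorm_spec v : T v ->
  (forall s c, List.NoDup s -> v = lin_ext (@fl_phi _ _ _ _ _ F) s c -> Rle (fnorm F v) (l1norm s c)) /\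
  (forall b, (forall s c, List.NoDup s -> v = lin_ext (@fl_phi _ _ _ _ _ F) s c -> Rle (b) (l1norm s c)) ->
     Rle (b) (fnorm F v)).
Proof.
move=> Tv; have [s [c [Hs Hv]]] := (proj1 (fl_onto F v) Tv).
set P := (fun r => exists (s : list (fl_set F)) (c : fl_set F -> rat),
          List.NoDup s /\ v = lin_ext (@fl_phi _ _ _ _ _ F) s c /\ r = l1norm s c).
have Hex : exists x, P x by exists (l1norm s c); exists s, c.
have Hpos : forall x, P x -> Rle R0 x by move=> x [s' [c' [_ [_ ->]]]]; apply: l1norm_ge0.
have [H1 H2] := Rinf_spec Hex Hpos.
split.
  by move=> s' c' H H'; apply: H1; exists s', c'.
by move=> b Hb; apply: H2 => x [s' [c' [H [H' ->]]]]; apply: Hb.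
Qed.

Lemma fnorm_le_fs (z : FS (fl_set F)) :
  Rle (fnorm F (lin (@fl_phi _ _ _ _ _ F) z)) (rat2R (l1 z)).
Proof.
have Tv : T (lin (@fl_phi _ _ _ _ _ F) z).
  apply/(fl_onto F); exists (supp z), (sval z); split; last by []. by apply/(@NoDup_uniq (ET (fl_set F))); exact: uniq_supp.
have [H1 _] := fnorm_spec Tv.
rewrite /l1 -l1norm_rat; apply: H1; last by []. by apply/(@NoDup_uniq (ET (fl_set F))); exact: uniq_supp.
Qed.

Lemma fnorm_ge_fs v b : T v ->
  (forall z : FS (fl_set F), lin (@fl_phi _ _ _ _ _ F) z = v -> Rle (b) (rat2R (l1 z))) ->
  Rle (b) (fnorm F v).
Proof.
move=> Tv Hb; have [_ H2] := fnorm_spec Tv; apply: H2 => s c Hs0 Hv.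
have Hs : uniq (s : seq (ET (fl_set F))) by apply/(@NoDup_uniq (ET (fl_set F))).
have := Hb (@of_list (fl_set F) s c); rewrite l1_of_list // l1norm_rat; apply.
by rewrite lin_of_list.
Qed.

Lemma fnorm_ge0 v : T v -> Rle R0 (fnorm F v).
Proof. by move=> Tv; apply: fnorm_ge_fs => // z _; apply: rat2R_ge0; apply: l1_ge0. Qed.
End Fnorm.


Section Grp.
Variable G : TopGroup.
Implicit Types x y g h : G.

Lemma inv_uniq x y : tg_mul x y = tg_one G -> tg_inv x = y.
Proof.
move=> E; rewrite -(tg_mulg1 (tg_inv x)) -E tg_mulA tg_mulVg; exact: tg_mul1g.
Qed.

Lemma inv_one : tg_inv (tg_one G) = tg_one G.
Proof. by apply: inv_uniq; rewrite tg_mul1g. Qed.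

Lemma inv_mul g h : tg_inv (tg_mul g h) = tg_mul (tg_inv h) (tg_inv g).
Proof.
apply: inv_uniq; rewrite tg_mulA -(tg_mulA g h) tg_mulgV tg_mulg1 tg_mulgV //.
Qed.

Lemma act_inv (S : G -> Prop) (X : Type) (a : G -> X -> X) g w :
  is_action S a -> S g -> S (tg_inv g) ->
  a g (a (tg_inv g) w) = w /\ a (tg_inv g) (a g w) = w.
Proof.
move=> [a1 aM] Sg Sg'; split.
  by rewrite -aM // tg_mulgV a1.
by rewrite -aM // tg_mulVg a1.
Qed.
End Grp.

Section LinSum.
Variables (V W : lmodType rat) (f : V -> W).
Hypothesis fL : forall (c : rat) u v, f (c *: u + v) = c *: f u + f v.

Lemma lin_f0 : f 0 = 0.
Proof.
have := fL (-1) 0 0; rewrite scaler0 add0r scaleN1r addNr; done.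
Qed.
Lemma lin_fD u v : f (u + v) = f u + f v.
Proof. by have := fL 1 u v; rewrite !scale1r. Qed.
Lemma lin_fZ (c : rat) u : f (c *: u) = c *: f u.
Proof. by have := fL c u 0; rewrite !addr0 lin_f0 addr0. Qed.
Lemma lin_fsum (I : Type) (l : seq I) (a : I -> rat) (F : I -> V) :
  f (\sum_(i <- l) a i *: F i) = \sum_(i <- l) a i *: f (F i).
Proof.
elim: l => [|i l IH]; first by rewrite !big_nil lin_f0.
by rewrite !big_cons fL IH.
Qed.
End LinSum.

Lemma sum_In_le (I : Type) (l : seq I) (F : I -> rat) x :
  (forall y, 0 <= F y) -> List.In x l -> F x <= \sum_(y <- l) F y.
Proof.
move=> H0; elim: l => [|y l IH] //= [->|Hx]; rewrite big_cons.
  by rewrite lerDl sumr_ge0.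
by apply: le_trans (IH Hx) _; rewrite lerDr.
Qed.

Lemma sum_ge0' (I : Type) (l : seq I) (F : I -> rat) :
  (forall y, 0 <= F y) -> 0 <= \sum_(y <- l) F y.
Proof. by move=> H; apply: sumr_ge0. Qed.

Lemma l1_sum (T I : Type) (l : seq I) (a : I -> rat) (z : I -> FS T) :
  l1 (\sum_(i <- l) a i *: z i) <= \sum_(i <- l) `|a i| * l1 (z i).
Proof.
elim: l => [|i l IH]; first by rewrite !big_nil l10.
rewrite !big_cons; apply: le_trans (l1P _ _ _) _; exact: lerD.
Qed.


Section FreeM.
Variables (G : TopGroup) (M : lmodType rat) (act : G -> M -> M)
  (Mdisc : dmodule (@wholeG G) act)
  (FM : filling (@wholeG G) act (fun _ => True)).

Definition Om := fl_set FM.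
Definition aM : G -> Om -> Om := @fl_act _ _ _ _ _ FM.
Definition phM : ET Om -> M := @fl_phi _ _ _ _ _ FM.

Lemma aM_action : is_action (@wholeG G) aM.
Proof. exact: fl_action. Qed.

Lemma aM_uv g w : aM g (aM (tg_inv g) w) = w.
Proof. by have [] := act_inv w aM_action (I : wholeG g) (I : wholeG (tg_inv g)). Qed.
Lemma aM_vu g w : aM (tg_inv g) (aM g w) = w.
Proof. by have [] := act_inv w aM_action (I : wholeG g) (I : wholeG (tg_inv g)). Qed.

Definition gactM (g : G) (f : FS Om) : FS Om := fsperm (aM_uv g) f.

Lemma gactM_val g f w : sval (gactM g f) w = sval f (aM (tg_inv g) w).
Proof. by []. Qed.

Lemma actL g (c : rat) u v : act g (c *: u + v) = c *: act g u + act g v.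
Proof. by have [_ [H _]] := Mdisc; apply: H. Qed.

Lemma lin_gactM g f : lin phM (gactM g f) = act g (lin phM f).
Proof.
rewrite /gactM (lin_perm _ (aM_vu g)) /lin (lin_fsum (@actL g)).
apply: eq_bigr => w _; congr (_ *: _); exact: (@fl_equiv _ _ _ _ _ FM g w I).
Qed.

Lemma l1_gactM g f : l1 (gactM g f) = l1 f.
Proof. exact: (l1_perm (aM_uv g) (aM_vu g)). Qed.

Lemma gactM_one f : gactM (tg_one G) f = f.
Proof. by apply: fsext => w; rewrite gactM_val inv_one (proj1 aM_action). Qed.

Lemma gactM_mul g h f : gactM (tg_mul g h) f = gactM g (gactM h f).
Proof.
apply: fsext => w; rewrite !gactM_val inv_mul (proj2 aM_action) //.
Qed.

Lemma gactM_lin g (c : rat) u v : gactM g (c *: u + v) = c *: gactM g u + gactM g v.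
Proof. exact: fspermP. Qed.

Lemma Kopen (l : seq Om) : exists W, tg_open W /\
  forall g, (forall w, List.In w l -> aM g w = w) <-> W g.
Proof.
elim: l => [|w l [Wl [Wlo HWl]]].
  by exists (fun _ => True); split; [exact: tg_open_full|].
have [_ [Ww [Wwo HWw]]] := @fl_proper _ _ _ _ _ FM w.
exists (fun x => Ww x /\ Wl x); split; first exact: tg_open_inter.
move=> g; split.
  move=> Hg; split; first by apply/(HWw g I); split=> //; apply: Hg; left.
  by apply/HWl => w' Hw'; apply: Hg; right.
move=> [/(HWw g I) [_ Hw] /HWl Hl] w' [<-|] //; exact: Hl.
Qed.

Lemma stab_open f : open_in (@wholeG G) (fun g => gactM g f = f).
Proof.
set Stab := fun g => gactM g f = f.
have [K [Ko HK]] := Kopen (supp f).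
have KS : forall g, K g -> Stab g.
  move=> g /HK Hg; apply: fsext => w; rewrite gactM_val.
  case: (eqVneq (sval f w) 0) => Hw.
    case: (eqVneq (sval f (aM (tg_inv g) w)) 0) => [->|H'] //.
    have Hin : List.In (aM (tg_inv g) w) (supp f) by apply/(@In_mem (ET Om)); rewrite mem_supp.
    have := Hg _ Hin; rewrite aM_uv => E.
    by move: H'; rewrite -E Hw eqxx.
  have Hin : List.In w (supp f) by apply/(@In_mem (ET Om)); rewrite mem_supp.
  by rewrite -{1}(Hg _ Hin) aM_vu.
have SM : forall g h, Stab g -> Stab h -> Stab (tg_mul g h).
  by move=> g h Hg Hh; rewrite /Stab gactM_mul Hh Hg.
have K1 : K (tg_one G) by apply/HK => w _; exact: (proj1 aM_action).
have Hloc : forall s, Stab s -> exists V, tg_open V /\ V s /\ forall b, V b -> Stab b.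
  move=> s Hs.
  have Hone : K (tg_mul (tg_inv s) s) by rewrite tg_mulVg.
  have [V [W [Vo [Wo [Vs [Ws HVW]]]]]] := tg_mul_cont Ko Hone.
  exists W; split=> //; split=> // b Wb.
  have : Stab (tg_mul s (tg_mul (tg_inv s) b)) by apply: SM => //; apply: KS; exact: HVW.
  by rewrite tg_mulA tg_mulgV tg_mul1g.
pose I := {s : G | Stab s}.
pose U (i : I) := sval (cid (Hloc _ (svalP i))).
exists (fun b => exists i, U i b); split.
  by apply: tg_open_union => i; rewrite /U; case: cid => V [].
move=> g _; split.
  move=> Hg; exists (exist _ g Hg); rewrite /U; case: cid => V [_ []] //=.
by move=> [i]; rewrite /U; case: cid => V [_ [_ HV]] /HV.
Qed.

Lemma gactM_dmodule : dmodule (@wholeG G) gactM.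
Proof.
split; first by split; [exact: gactM_one| move=> g h x _ _; exact: gactM_mul].
split; first by move=> g _ c u v; exact: gactM_lin.
exact: stab_open.
Qed.

Lemma lin_dmorph : dmorph (@wholeG G) gactM act (lin phM).
Proof. by split; [exact: linP| move=> g v _; exact: lin_gactM]. Qed.

Lemma surjM m : exists z : FS Om, lin phM z = m.
Proof.
have [s [c [Hs ->]]] := proj1 (fl_onto FM m) I.
exists (of_list s c); rewrite lin_of_list //.
exact/(@NoDup_uniq (ET Om)).
Qed.

End FreeM.


Section Proj.
Variables (G : TopGroup) (Hs : G -> Prop) (M : lmodType rat) (act : G -> M -> M)
  (Mdisc : dmodule (@wholeG G) act) (N : M -> Prop) (Nsum : direct_summand Hs act N).

Lemma sub_opp (P : M -> Prop) : submodule Hs act P -> forall u v, P u -> P v -> P (u - v).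
Proof.
move=> [_ [PD [PZ _]]] u v Pu Pv; rewrite -scaleN1r; exact: PD (PZ _ _ Pv).
Qed.

Lemma sub_lin (P : M -> Prop) : submodule Hs act P -> forall (c : rat) u v, P u -> P v -> P (c *: u + v).
Proof. move=> [_ [PD [PZ _]]] c u v Pu Pv; exact: PD (PZ _ _ Pu) Pv. Qed.

Lemma pi_exists : exists pi : M -> M,
  (forall (c : rat) u v, pi (c *: u + v) = c *: pi u + pi v) /\
  (forall h m, Hs h -> pi (act h m) = act h (pi m)) /\
  (forall m, N (pi m)) /\ (forall m, N m -> pi m = m).
Proof.
have [NS [N' [N'S [Hdec Hint]]]] := Nsum.
have uniq_dec : forall m a b, N a -> N' (m - a) -> N b -> N' (m - b) -> a = b.
  move=> m a b Na Na' Nb Nb'; apply/eqP; rewrite -subr_eq0; apply/eqP; apply: Hint.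
    exact: sub_opp.
  have -> : a - b = (m - b) - (m - a) by rewrite opprB [RHS]addrC addrA subrK.
  exact: sub_opp.
have dec : forall m, exists n, N n /\ N' (m - n).
  move=> m; have [n [n' [Nn [Nn' ->]]]] := Hdec m; exists n; split=> //.
  by rewrite addrAC subrr add0r.
pose pi m := sval (cid (dec m)).
have piN : forall m, N (pi m) by move=> m; rewrite /pi; case: cid => ? [].
have piN' : forall m, N' (m - pi m) by move=> m; rewrite /pi; case: cid => ? [].
have [N0 _] := NS; have [N'0 _] := N'S.
have actL : forall g (c : rat) u v, act g (c *: u + v) = c *: act g u + act g v.
  by have [_ [H _]] := Mdisc; move=> g; apply: H.
exists pi; split; [|split; [|split]] => //.
- move=> c u v; symmetry; apply: (uniq_dec (c *: u + v)).
  + exact: sub_lin.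
  + have -> : c *: u + v - (c *: pi u + pi v) = c *: (u - pi u) + (v - pi v).
      by rewrite scalerBr opprD addrACA.
    exact: sub_lin.
  + exact: piN.
  + exact: piN'.
- move=> h m Hh; apply: (uniq_dec (act h m)); first exact: piN.
    exact: piN'.
  + by have [_ [_ [_ NA]]] := NS; apply: NA => //; exact: piN.
  + rewrite -scaleN1r -(lin_fZ (actL h)) -(lin_fD (actL h)) scaleN1r.
    by have [_ [_ [_ NA]]] := N'S; apply: NA => //; exact: piN'.
- move=> m Nm; apply: (uniq_dec m); [exact: piN|exact: piN'|exact: Nm|].
  by rewrite subrr.
Qed.
End Proj.


Section Main.
Variables (G : TopGroup) (Hs : G -> Prop) (HH : closed_subgroup Hs)
  (M : lmodType rat) (act : G -> M -> M)
  (Mdisc : dmodule (@wholeG G) act)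
  (FM : filling (@wholeG G) act (fun _ => True))
  (N : M -> Prop) (Nsub : submodule Hs act N)
  (FN : filling Hs act N).

Local Notation OM := (Om FM).
Local Notation aMM := (@aM _ _ _ FM).
Local Notation pM := (@phM _ _ _ FM).
Local Notation gM := (@gactM _ _ _ FM).
Local Notation ON := (fl_set FN).
Local Notation aN := (@fl_act _ _ _ _ _ FN).
Local Notation pN := (@fl_phi _ _ _ _ _ FN : ET ON -> M).

Lemma actL' g (c : rat) u v : act g (c *: u + v) = c *: act g u + act g v.
Proof. by have [_ [H _]] := Mdisc; apply: H. Qed.

Lemma transN h (z : FS ON) : Hs h ->
  exists z' : FS ON, lin pN z' = act h (lin pN z) /\ l1 z' = l1 z.
Proof.
move=> Hh; have [H1 [_ [Hinv _]]] := HH.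
have Hh' := Hinv _ Hh.
have uv : forall w : ET ON, aN h (aN (tg_inv h) w) = w.
  by move=> w; have [] := act_inv w (fl_action FN) Hh Hh'.
have vu : forall w : ET ON, aN (tg_inv h) (aN h w) = w.
  by move=> w; have [] := act_inv w (fl_action FN) Hh Hh'.
exists (fsperm uv z); split; last exact: l1_perm.
rewrite (lin_perm _ vu) /lin (lin_fsum (@actL' h)).
by apply: eq_bigr => w _; congr (_ *: _); exact: (@fl_equiv _ _ _ _ _ FN h w Hh).
Qed.

Lemma surjN m : N m -> exists z : FS ON, lin pN z = m.
Proof.
move=> Nm; have [s [c [Hs0 ->]]] := proj1 (fl_onto FN m) Nm.
exists (of_list s c); rewrite lin_of_list //.
exact/(@NoDup_uniq (ET ON)).
Qed.

Lemma dirA : exists K : rat, 0 < K /\ forall n, N n ->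
  Rle (fnorm FM n) (Rmult (rat2R K) (fnorm FN n)).
Proof.
have [LN HLN] := fl_fin FN.
pose rep m := sval (cid (surjM FM m)).
have repP : forall m, lin pM (rep m) = m by move=> m; rewrite /rep; case: cid.
pose K1 := \sum_(w0 <- LN) l1 (rep (pN w0)) + 1.
have K1pos : 0 < K1 by apply: ltr_wpDl => //; apply: sumr_ge0 => *; exact: l1_ge0.
have Hb : forall w : ET ON, exists z : FS OM, lin pM z = pN w /\ l1 z <= K1.
  move=> w; have [w0 [g [Inw0 [Hg ->]]]] := HLN w.
  exists (gM g (rep (pN w0))); split.
    by rewrite (lin_gactM Mdisc) repP (@fl_equiv _ _ _ _ _ FN g w0 Hg).
  rewrite l1_gactM; apply: le_trans (_ : _ <= \sum_(w0 <- LN) l1 (rep (pN w0))) _.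
    by apply: (sum_In_le (F := fun w0 => l1 (rep (pN w0)))) => // y; exact: l1_ge0.
  by rewrite lerDl.
exists K1; split=> // n Nn.
have K1R : Rlt R0 (rat2R K1).
  by move: K1pos; rewrite -(ltr_rat R) rmorph0 rat2RE => /RltP H; exact H.
suff: Rle (Rmult (fnorm FM n) (Rinv (rat2R K1))) (fnorm FN n).
  move=> H; have := Rmult_le_compat_l _ _ _ (Rlt_le _ _ K1R) H.
  have -> : Rmult (rat2R K1) (Rmult (fnorm FM n) (Rinv (rat2R K1))) = fnorm FM n.
    by field; apply: Rgt_not_eq.
  done.
apply: (fnorm_ge_fs Nn) => zN HzN.
have [z [Hz Hzl]] := assemble (sval zN) (l := supp zN)
  (fun x _ => Hb x).
have E : lin pM z = n by rewrite Hz -HzN.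
have H1 := fnorm_le_fs z; rewrite E in H1.
have H2 : Rle (rat2R (l1 z)) (Rmult (rat2R K1) (rat2R (l1 zN))).
  by rewrite -rat2R_mul; apply: rat2R_le.
apply: (Rmult_le_reg_l (rat2R K1)) => //.
have -> : Rmult (rat2R K1) (Rmult (fnorm FM n) (Rinv (rat2R K1))) = fnorm FM n.
  by field; apply: Rgt_not_eq.
exact: Rle_trans H1 H2.
Qed.

Lemma In_flatten (X : Type) (Y : eqType) (f : X -> seq Y) (L : seq X) x y :
  List.In x L -> y \in f x -> y \in flatten [seq f m | m <- L].
Proof.
elim: L => [|a L IH] //= [->|Hx] Hy; rewrite mem_cat ?Hy //.
by rewrite IH ?orbT.
Qed.

Lemma dirB (s : M -> FS OM)
  (sL : forall (c : rat) u v, s (c *: u + v) = c *: s u + s v)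
  (sE : forall g m, s (act g m) = gM g (s m))
  (sS : forall m, lin pM (s m) = m)
  (pi : M -> M)
  (piL : forall (c : rat) u v, pi (c *: u + v) = c *: pi u + pi v)
  (piE : forall h m, Hs h -> pi (act h m) = act h (pi m))
  (piN : forall m, N (pi m)) (piId : forall m, N m -> pi m = m)
  (L : seq M) (HL : forall v, N v -> gen Hs act L v) :
  exists K : rat, 0 < K /\ forall n, N n ->
  Rle (fnorm FN n) (Rmult (rat2R K) (fnorm FM n)).
Proof.
have [H1 [Hmul _]] := HH.
have [LM HLM] := fl_fin FM.
pose Kpp := \sum_(w0 <- LM) l1 (s (pM w0)) + 1.
have Kpp_pos : 0 < Kpp by apply: ltr_wpDl => //; apply: sumr_ge0 => *; exact: l1_ge0.
have B1 : forall w : ET OM, l1 (s (pM w)) <= Kpp.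
  move=> w; have [w0 [g [Inw0 [_ ->]]]] := HLM w.
  have -> : pM (aMM g w0) = act g (pM w0) by exact: (@fl_equiv _ _ _ _ _ FM g w0 I).
  rewrite sE l1_gactM; apply: le_trans (_ : _ <= \sum_(w0 <- LM) l1 (s (pM w0))) _.
    by apply: (sum_In_le (F := fun w0 => l1 (s (pM w0)))) => // y; exact: l1_ge0.
  by rewrite lerDl.
have B2 : forall x : FS OM, l1 (s (lin pM x)) <= Kpp * l1 x.
  move=> x; rewrite /lin (lin_fsum sL); apply: le_trans (l1_sum _ _ _) _.
  rewrite /l1 mulr_sumr; apply: ler_sum => w _.
  by rewrite [Kpp * _]mulrC; apply: ler_wpM2l; [exact: normr_ge0|exact: B1].
pose W0 := flatten [seq supp (s m) | m <- L].
pose OmF (w : ET OM) := exists h w0, Hs h /\ w0 \in W0 /\ w = aMM h w0.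
have sval_s0 : forall w, sval (s 0) w = 0 by move=> w; rewrite (lin_f0 sL).
have B3 : forall v, gen Hs act L v -> forall w, sval (s v) w != 0 -> OmF w.
  move=> v; elim => {v} [x Hx||u v _ IHu _ IHv|c u _ IHu|g u Hg _ IHu] w Hw.
  - exists (tg_one G), w; split=> //; split; last by rewrite (proj1 (aM_action FM)).
    by apply: (In_flatten (f := fun m => supp (s m))) Hx _; rewrite mem_supp.
  - by move: Hw; rewrite sval_s0 eqxx.
  - move: Hw; rewrite (lin_fD sL) fsvalD.
    case: (eqVneq (sval (s u) w) 0) => [->|/IHu //]; rewrite add0r; exact: IHv.
  - move: Hw; rewrite (lin_fZ sL) fsvalZ.
    by case: (eqVneq (sval (s u) w) 0) => [->|/IHu //]; rewrite mulr0 eqxx.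
  - move: Hw; rewrite sE gactM_val => /IHu [h [w0 [Hh [Hw0 E]]]].
    exists (tg_mul g h), w0; split; first exact: Hmul.
    split=> //; rewrite (proj2 (aM_action FM)) // -E.
    by rewrite aM_uv.
have exN : forall m, exists z : FS ON, N m -> lin pN z = m.
  move=> m; case: (pselect (N m)) => [/surjN [z Hz]|Hn]; first by exists z.
  by exists 0.
pose repN m := sval (cid (exN m)).
have repNP : forall m, N m -> lin pN (repN m) = m by move=> m; rewrite /repN; case: cid.
pose Kp := \sum_(w0 <- W0) l1 (repN (pi (pM w0))) + 1.
have Kp_pos : 0 < Kp by apply: ltr_wpDl => //; apply: sumr_ge0 => *; exact: l1_ge0.
have B4 : forall w, OmF w -> exists z : FS ON, lin pN z = pi (pM w) /\ l1 z <= Kp.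
  move=> w [h [w0 [Hh [Hw0 ->]]]].
  have [z' [Ez' Lz']] := transN (repN (pi (pM w0))) Hh.
  exists z'; split.
    rewrite Ez' repNP // -piE //; congr pi; symmetry.
    exact: (@fl_equiv _ _ _ _ _ FM h w0 I).
  rewrite Lz'; apply: le_trans (_ : _ <= \sum_(w0 <- W0) l1 (repN (pi (pM w0)))) _.
    apply: (sum_In_le (F := fun w0 => l1 (repN (pi (pM w0))))).
      by move=> y; exact: l1_ge0.
    by apply/In_mem.
  by rewrite lerDl.
exists (Kp * Kpp); split; first exact: mulr_gt0.
move=> n Nn.
have KR : Rlt R0 (rat2R (Kp * Kpp)).
  by move: (mulr_gt0 Kp_pos Kpp_pos); rewrite -(ltr_rat R) rmorph0 rat2RE => /RltP H; exact H.
suff: Rle (Rmult (fnorm FN n) (Rinv (rat2R (Kp * Kpp)))) (fnorm FM n).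
  move=> H; have := Rmult_le_compat_l _ _ _ (Rlt_le _ _ KR) H.
  have -> : Rmult (rat2R (Kp * Kpp)) (Rmult (fnorm FN n) (Rinv (rat2R (Kp * Kpp)))) = fnorm FN n.
    by field; apply: Rgt_not_eq.
  done.
apply: (fnorm_ge_fs I) => x Hx.
pose y := s n.
have En : n = \sum_(w <- supp y) sval y w *: pi (pM w).
  by rewrite -(lin_fsum piL) -/(lin pM y) sS piId.
have Hy : forall w, List.In w (supp y) -> exists z : FS ON, lin pN z = pi (pM w) /\ l1 z <= Kp.
  move=> w /(@In_mem (ET OM)); rewrite mem_supp => Hw; apply: B4.
  exact: (B3 n (HL n Nn)).
have [z [Hz Hzl]] := assemble (sval y) Hy.
have Hly : l1 y <= Kpp * l1 x by rewrite /y -Hx; exact: B2.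
have Hzl2 : l1 z <= (Kp * Kpp) * l1 x.
  apply: le_trans Hzl _; rewrite -mulrA; apply: ler_wpM2l; first exact: ltW.
  exact: Hly.
have Hf1 := fnorm_le_fs z; rewrite Hz -En in Hf1.
have Hf2 : Rle (rat2R (l1 z)) (Rmult (rat2R (Kp * Kpp)) (rat2R (l1 x))).
  by rewrite -rat2R_mul; apply: rat2R_le.
apply: (Rmult_le_reg_l (rat2R (Kp * Kpp))) => //.
have -> : Rmult (rat2R (Kp * Kpp)) (Rmult (fnorm FN n) (Rinv (rat2R (Kp * Kpp)))) = fnorm FN n.
  by field; apply: Rgt_not_eq.
exact: Rle_trans Hf1 Hf2.
Qed.
End Main.


Theorem proposition4p5 (G : TopGroup) (HG : TDLC G)
  (H : G -> Prop) (HH : closed_subgroup H)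
  (M : lmodType rat) (act : G -> M -> M)
  (Mdisc : dmodule (@wholeG G) act) (Mfg : fin_gen (@wholeG G) act)
  (Mproj : projective (@wholeG G) act)
  (FM : filling (@wholeG G) act (fun _ => True))
  (N : M -> Prop) (Nsum : direct_summand H act N) (Nfg : fin_gen_sub H act N)
  (FN : filling H act N) :
  norm_equiv (fnorm FM) (fnorm FN) N.
Proof.
have [pi [piL [piE [piN piId]]]] := pi_exists Mdisc Nsum.
have idM : dmorph (@wholeG G) act act (fun m : M => m) by [].
have [s [[sL sE] sS]] := Mproj _ _ _ _ _ _ (gactM_dmodule FM) Mdisc
  (lin_dmorph Mdisc FM) (surjM FM) idM.
have [L [_ HL]] := Nfg.
have Nsub := proj1 Nsum.
have [K1 [K1p HA]] := dirA Mdisc FM FN.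
have [K2 [K2p HB]] := dirB HH Mdisc FN sL (fun g m => sE g m I) sS piL piE piN piId HL.
have rpos : forall k : rat, 0 < k -> Rlt R0 (rat2R k).
  by move=> k kp; move: kp; rewrite -(ltr_rat R) rmorph0 rat2RE => /RltP Hk; exact Hk.
have k1 := rpos _ K1p; have k2 := rpos _ K2p.
exists (Rplus (rat2R K1) (rat2R K2)); split; first lra.
move=> n Nn.
have a0 := fnorm_ge0 FM (I : (fun _ => True) n).
have b0 := fnorm_ge0 FN Nn.
have ha := HA n Nn; have hb := HB n Nn.
split; nra.
Qed.
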